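(* Let $A$ be a finitely generated $K$-algebra and $\mathcal{F}=\{V_n\}$ a filtration of $A$ with $\mathrm{h}_{\mathrm{alg}}(A,\mathcal{F})=0$. Then: (1) for any filtration $\mathcal{G}=\{W_n\}$ of $A$ with $W_n\subseteq V_n$ for all $n$, $\mathrm{h}_{\mathrm{alg}}(A,\mathcal{G})=0$; (2) for a fixed $k$, the filtration $\mathcal{G}=\{W_n\}$ with $W_n:=V_{nk}$ satisfies $\mathrm{h}_{\mathrm{alg}}(A,\mathcal{G})=0$; (3) for any filtration $\mathcal{G}=\{W_n\}$ of $A$ such that $W_1$ is finite-dimensional and $W_k=(W_1)^k$ for every $k$, one has $\mathrm{h}_{\mathrm{alg}}(A,\mathcal{G})=0$.
   Context: A filtration of a $K$-algebra $A$ is a family $\{V_n\}_{n\ge0}$ of subspaces with $0=V_0\subseteq V_1\subseteq\cdots$, $A=\bigcup_nV_n$ and $V_nV_m\subseteq V_{n+m}$; the quotients $V_n/V_{n-1}$ are assumed finite-dimensional. The algebraic entropy is $\mathrm{h}_{\mathrm{alg}}(A,\mathcal{F})=0$ if $A$ is finite-dimensional and otherwise $\limsup_{n\to\infty}\frac{\log\dim(V_n/V_{n-1})}{n}$. For a subspace $W$, $W^k$ denotes the linear span of products of $k$ elements of $W$. *)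

(* Defs.v *)
From HB Require Import structures.
From mathcomp Require Import all_boot all_order all_algebra.
From mathcomp Require Import classical_sets boolp reals ereal exp sequences.
Set Implicit Arguments. Unset Strict Implicit. Unset Printing Implicit Defensive.
Import Order.TTheory GRing.Theory Num.Theory.
Local Open Scope ring_scope.

Section AlgEntropy.
Variables (K : fieldType) (A : algType K).

Definition is_subspace (V : A -> Prop) : Prop :=
  [/\ V 0, (forall x y, V x -> V y -> V (x + y)) & (forall (c : K) x, V x -> V (c *: x)) ].

Definition spans_mod (V W : A -> Prop) (s : seq A) : Prop :=
  (forall x, x \in s -> V x) /\
  forall v, V v -> exists c : 'I_(size s) -> K, W (v - \sum_(i < size s) c i *: s`_i).

(** dim (V / W): least size of a spanning list of V modulo W (0 if none exists;
    only used when it exists). *)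
Definition qdim (V W : A -> Prop) : nat :=
  xget 0%N (fun n : nat => exists s, size s = n /\ spans_mod V W s /\
                         forall s', spans_mod V W s' -> (n <= size s')%N).

Definition finite_dim (V : A -> Prop) : Prop :=
  exists s, spans_mod V (fun x => x = 0) s.

Definition filtration (V : nat -> A -> Prop) : Prop :=
  (forall n, is_subspace (V n)) /\
  (forall x, V 0%N x <-> x = 0) /\
  (forall n x, V n x -> V n.+1 x) /\
  (forall x, exists n, V n x) /\
  (forall n m x y, V n x -> V m y -> V (n + m)%N (x * y)) /\
  (forall n, exists s, spans_mod (V n.+1) (V n) s).

Definition is_subalgebra (S : A -> Prop) : Prop :=
  [/\ is_subspace S, S 1 & (forall x y, S x -> S y -> S (x * y))].

Definition fin_gen_algebra : Prop :=
  exists g : seq A, forall S, is_subalgebra S -> (forall x, x \in g -> S x) ->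
    forall x, S x.

(** W^k: linear span of the products of k elements of W. *)
Definition pow_span (W : A -> Prop) (k : nat) (x : A) : Prop :=
  exists r : seq (K * seq A),
    (forall p, p \in r -> size p.2 = k /\ forall w, w \in p.2 -> W w) /\
    x = \sum_(p <- r) p.1 *: \prod_(w <- p.2) w.

(** Algebraic entropy (extended-real valued): 0 if A is finite-dimensional,
    otherwise limsup_n log(dim (V_n/V_(n-1))) / n.  (ln 0 = 0 in MathComp;
    this does not affect the limsup, which is >= 0 when A is infinite-dim.) *)
Definition h_alg (R : realType) (V : nat -> A -> Prop) : \bar R :=
  if `[< finite_dim (fun _ => True) >] then 0%E
  else limn_esup (fun n : nat =>
         ((ln ((qdim (V n) (V n.-1))%:R : R)) / n%:R)%:E).
End AlgEntropy.

(* Main.v *)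
Require Import Defs.
From HB Require Import structures.
From mathcomp Require Import all_boot all_order all_algebra.
From mathcomp Require Import classical_sets boolp reals ereal exp sequences.
Import Order.TTheory GRing.Theory Num.Theory.
Local Open Scope ring_scope.
From mathcomp Require Import ring lra.
Set Implicit Arguments. Unset Strict Implicit. Unset Printing Implicit Defensive.
Section An.
Variable R : realType.

Definition LS (u : nat -> R) := limn_esup (fun n => (u n)%:E).

Lemma LS_eq u : LS u = ereal_inf (range (esups (fun n => (u n)%:E))).
Proof. by rewrite /LS limn_esup_lim; apply/cvg_lim => //; exact: cvg_esups_inf. Qed.

Lemma LS_ge0 u : (forall n, 0 <= u n) -> (0 <= LS u)%E.
Proof.
move=> u0; rewrite LS_eq; apply: le_ereal_inf_tmp => _ [n _ <-].
apply: le_trans (_ : (u n)%:E <= _)%E; first by rewrite lee_fin.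
by apply: ereal_sup_ubound; exists n => /=.
Qed.

Lemma LS_le u a N : (forall n, (N <= n)%N -> u n <= a) -> (LS u <= a%:E)%E.
Proof.
move=> H; rewrite LS_eq; apply: le_trans (_ : esups (fun n => (u n)%:E) N <= _)%E.
  by apply: ereal_inf_lbound; exists N.
by apply: ge_ereal_sup => _ [n /= Nn <-]; rewrite lee_fin H.
Qed.

Lemma LS_lt u a : (LS u < a%:E)%E -> exists N, forall n, (N <= n)%N -> u n < a.
Proof.
rewrite LS_eq => /ereal_inf_lt [_ [N _ <-]] H; exists N => n Nn.
rewrite -lte_fin; apply: le_lt_trans H.
by apply: ereal_sup_ubound; exists n.
Qed.

Definition subexp (f : nat -> nat) := forall e : R, 0 < e ->
  exists C : R, forall n, (f n)%:R <= C * expR e ^+ n.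

Lemma ln_nat_ge0 (k : nat) : (0 <= ln (k%:R : R))%R.
Proof.
case: k => [|k]; first by rewrite ln0.
by apply: ln_ge0; rewrite ler1n.
Qed.

Lemma term_ge0 (f : nat -> nat) n : (0 <= ln ((f n)%:R : R) / n%:R)%R.
Proof. by rewrite divr_ge0 // ln_nat_ge0. Qed.

Lemma from_LS f : (LS (fun n => (ln ((f n)%:R : R) / n%:R)%R) <= 0)%E -> subexp f.
Proof.
move=> H e e0.
have [N HN] : exists N, forall n, (N <= n)%N -> ln ((f n)%:R : R) / n%:R < e.
  by apply: LS_lt; apply: le_lt_trans H _; rewrite lte_fin.
exists (1 + (\sum_(i < N.+1) f i)%N%:R) => n.
have ge1 : 1 <= expR e ^+ n by rewrite exprn_ege1 // -expR0 ler_expR ltW.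
have [nN|Nn] := leqP n N.
  apply: le_trans (_ : 1 + (\sum_(i < N.+1) f i)%N%:R <= _); last first.
    by rewrite ler_peMr // addr_ge0.
  apply: le_trans (_ : (\sum_(i < N.+1) f i)%N%:R <= _); last by rewrite lerDr.
  have nN1 : (n < N.+1)%N by [].
  by rewrite ler_nat (bigD1 (Ordinal nN1)) //= leq_addr.
case: (posnP (f n)) => [->|fn0]; first by rewrite mulr_ge0 // ?addr_ge0 // (le_trans _ ge1).
have := HN n (ltnW Nn).
have n0 : (0 < n%:R :> R) by rewrite ltr0n (leq_ltn_trans _ Nn).
rewrite ltr_pdivrMr // -ltr_expR lnK ?posrE ?ltr0n // -expRM_natr => lt.
apply: le_trans (ltW lt) _.
by rewrite ler_peMl ?expR_ge0 // lerDl.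
Qed.

Lemma to_LS f : subexp f -> (LS (fun n => (ln ((f n)%:R : R) / n%:R)%R) <= 0)%E.
Proof.
move=> Hf; apply/lee_addgt0Pr => e e0; rewrite add0e.
have e20 : 0 < e / 2 by rewrite divr_gt0.
have [C HC] := Hf _ e20.
set N := (Num.truncn (`|ln C| / (e / 2))).+1.
have HN : `|ln C| / (e / 2) < N%:R by apply: truncnS_gt.
apply: (@LS_le _ _ N) => n Nn.
case: (posnP (f n)) => [->|fn0]; first by rewrite ln0 // mul0r ltW.
have n0 : (0 < n%:R :> R) by rewrite ltr0n (leq_trans _ Nn).
have b0 : 0 < expR (e / 2) ^+ n by rewrite exprn_gt0 // expR_gt0.
have C0 : 0 < C.
  have := HC n; have : (0 < (f n)%:R :> R) by rewrite ltr0n.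
  move=> h1 h2; have := lt_le_trans h1 h2.
  by rewrite pmulr_lgt0.
rewrite ler_pdivrMr //.
apply: le_trans (_ : ln (C * expR (e / 2) ^+ n) <= _).
  by rewrite ler_ln ?posrE ?ltr0n ?mulr_gt0 // HC.
rewrite lnM ?posrE // -expRM_natr expRK.
have : `|ln C| <= e / 2 * n%:R.
  rewrite ltr_pdivrMr // in HN.
  apply: le_trans (ltW HN) _; rewrite mulrC ler_pM2l // ler_nat //.
move=> h; apply: le_trans (_ : e / 2 * n%:R + e / 2 * n%:R <= _).
  by rewrite lerD2r (le_trans (ler_norm _)).
by rewrite -mulrDl -splitr.
Qed.

Lemma geom_le (b : R) n : 1 < b ->
  \sum_(i < n.+1) b ^+ i <= b ^+ n.+1 / (b - 1).
Proof.
move=> b1; have b10 : 0 < b - 1 by rewrite subr_gt0.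
elim: n => [|n IH].
  by rewrite big_ord1 expr0 expr1 ler_pdivlMr // mul1r gerBl.
rewrite big_ord_recr /=; apply: le_trans (_ : b ^+ n.+1 / (b - 1) + b ^+ n.+1 <= _).
  by rewrite lerD2r.
rewrite [b ^+ n.+2]exprS; set x := b ^+ n.+1.
rewrite le_eqVlt; apply/orP; left; apply/eqP.
field; by rewrite subr_eq0 gt_eqF.
Qed.

Lemma subexp_sum f : subexp f -> subexp (fun n => (\sum_(i < n.+1) f i)%N).
Proof.
move=> Hf e e0; have [C HC] := Hf e e0.
have b1 : 1 < expR e by rewrite -expR0 ltr_expR.
have b10 : 0 < expR e - 1 by rewrite subr_gt0.
have C0 : 0 <= C.
  by have := HC 0%N; rewrite expr0 mulr1; apply: le_trans; rewrite ler0n.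
exists (C * (expR e / (expR e - 1))) => n.
rewrite natr_sum.
apply: le_trans (_ : \sum_(i < n.+1) C * expR e ^+ i <= _).
  by apply: ler_sum => i _; exact: HC.
rewrite -mulr_sumr -mulrA ler_wpM2l //.
apply: le_trans (@geom_le (expR e) n b1) _.
by rewrite exprS mulrAC.
Qed.

Lemma subexp_comp f g m : (0 < m)%N -> subexp f ->
  (forall n, (g n <= f (n * m)%N)%N) -> subexp g.
Proof.
move=> m0 Hf Hg e e0.
have m0' : (0 < m%:R :> R) by rewrite ltr0n.
have [C HC] := Hf (e / m%:R) (divr_gt0 e0 m0').
exists C => n; apply: le_trans (_ : (f (n * m)%N)%:R <= _); first by rewrite ler_nat Hg.
apply: le_trans (HC _) _.
by rewrite mulnC exprM -expRM_natr divfK ?gt_eqF.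
Qed.
End An.
Section La.
Variables (K : fieldType) (A : algType K).

Fixpoint sp (s : seq A) (x : A) : Prop :=
  match s with
  | [::] => x = 0
  | a :: s' => exists k y, sp s' y /\ x = k *: a + y
  end.

Lemma sp0 s : sp s 0.
Proof. elim: s => [|a s IH] //=; exists 0, 0; split => //; by rewrite scale0r addr0. Qed.

Lemma spD s x y : sp s x -> sp s y -> sp s (x + y).
Proof.
elim: s x y => [|a s IH] x y /=; first by move=> -> ->; rewrite addr0.
move=> [k [x' [h1 ->]]] [l [y' [h2 ->]]]; exists (k + l), (x' + y'); split; first exact: IH.
by rewrite scalerDl addrACA.
Qed.

Lemma spZ s c x : sp s x -> sp s (c *: x).
Proof.
elim: s x => [|a s IH] x /=; first by move=> ->; rewrite scaler0.
move=> [k [x' [h1 ->]]]; exists (c * k), (c *: x'); split; first exact: IH.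
by rewrite scalerDr scalerA.
Qed.

Lemma sp_cat s t x y : sp s x -> sp t y -> sp (s ++ t) (x + y).
Proof.
elim: s x => [|a s IH] x /=; first by move=> ->; rewrite add0r.
move=> [k [x' [h1 ->]]] hy; exists k, (x' + y); split; first exact: IH.
by rewrite addrA.
Qed.

Lemma sp_sub U s x : is_subspace U -> (forall y, y \in s -> U y) -> sp s x -> U x.
Proof.
move=> [U0 UD UZ]; elim: s x => [|a s IH] x /=; first by move=> _ ->.
move=> Hs [k [y [hy ->]]]; apply: UD; first by apply: UZ; apply: Hs; rewrite mem_head.
by apply: IH => // z hz; apply: Hs; rewrite in_cons hz orbT.
Qed.

Lemma sp_inspan s x : sp s x <-> exists c : 'I_(size s) -> K, x = \sum_(i < size s) c i *: s`_i.
Proof.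
elim: s x => [|a s IH] x /=.
  by split => [->|[c ->]]; [exists (fun _ => 0); rewrite big_ord0 | rewrite big_ord0].
split.
  move=> [k [y [/IH [c ->] ->]]].
  exists (fun i => if unlift ord0 i is Some j then c j else k).
  by rewrite big_ord_recl /= unlift_none; congr (_ + _); apply: eq_bigr => i _; rewrite liftK.
move=> [c ->]; rewrite big_ord_recl /=; exists (c ord0), (\sum_(i < size s) c (lift ord0 i) *: s`_i).
by split => //; apply/IH; exists (fun i => c (lift ord0 i)).
Qed.

Lemma spans_modE (V W : A -> Prop) s : spans_mod V W s <->
  (forall x, x \in s -> V x) /\ forall v, V v -> exists y, sp s y /\ W (v - y).
Proof.
split => [[h1 h2]|[h1 h2]]; split => // v /h2.
  by move=> [c Hc]; exists (\sum_(i < size s) c i *: s`_i); split => //; apply/sp_inspan; exists c.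
by move=> [y [/sp_inspan [c ->] hW]]; exists c.
Qed.

Lemma steinitz s U : is_subspace U -> (forall u, U u -> sp s u) ->
  exists t, (size t <= size s)%N /\ (forall x, x \in t -> U x) /\ forall u, U u -> sp t u.
Proof.
elim: s U => [|a s IH] U HU HUs.
  by exists [::]; split => //; split => // u /HUs.
have [[u0 [k [y [Uu0 [hy [e0 k0]]]]]]|N] :=
  pselect (exists u0 k y, U u0 /\ sp s y /\ u0 = k *: a + y /\ k != 0).
  pose U' := fun u => U u /\ sp s u.
  have HU' : is_subspace U'.
    case: HU => [U0 UD UZ]; split; first by split => //; exact: sp0.
      by move=> x z [? ?] [? ?]; split; [apply: UD | apply: spD].
    by move=> c x [? ?]; split; [apply: UZ | apply: spZ].
  have [t [st [tU' Ut']]] := IH U' HU' (fun u h => h.2).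
  exists (u0 :: t); split; first by rewrite /= ltnS.
  split.
    by move=> x; rewrite in_cons => /orP [/eqP -> //| /tU' []].
  move=> u Uu; have [d [z [hz ez]]] := HUs u Uu.
  have U'w : U' (u + (- (d / k)) *: u0).
    case: HU => [U0 UD UZ]; split; first by apply: UD => //; apply: UZ.
    have -> : u + (- (d / k)) *: u0 = z + (- (d / k)) *: y.
      rewrite ez e0 scalerDr scalerA mulNr divfK // scaleNr.
      by rewrite [d *: a + z]addrC -addrA addNKr.
    by apply: spD => //; apply: spZ.
  exists (d / k), (u + (- (d / k)) *: u0); split; first exact: Ut'.
  by rewrite scaleNr addrC -addrA addNr addr0.
have Us : forall u, U u -> sp s u.
  move=> u Uu; have [k [y [hy ey]]] := HUs u Uu.
  case: (eqVneq k 0) => [k0|k0]; first by rewrite ey k0 scale0r add0r.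
  by exfalso; apply: N; exists u, k, y.
have [t [st ?]] := IH U HU Us.
by exists t; split => //; apply: leq_trans st _.
Qed.

Lemma qdim_spec (V W : A -> Prop) : (exists s, spans_mod V W s) ->
  (exists s, size s = qdim V W /\ spans_mod V W s) /\
  (forall s', spans_mod V W s' -> (qdim V W <= size s')%N).
Proof.
move=> ex.
have exQ : exists n, `[< exists s, size s = n /\ spans_mod V W s >].
  by case: ex => s hs; exists (size s); apply/asboolP; exists s.
have [n /asboolP [s [sz hs]] mn] := ex_minnP exQ.
have P : exists n, (fun n : nat => exists s, size s = n /\ spans_mod V W s /\
    forall s', spans_mod V W s' -> (n <= size s')%N) n.
  exists n, s; split => //; split => // s' hs'.
  by apply: mn; apply/asboolP; exists s'.
have [s1 [sz1 [hs1 H1]]] := xgetPex 0%N P.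
by split; [exists s1 | ].
Qed.

Lemma qdim_le (V W : A -> Prop) s : spans_mod V W s -> (qdim V W <= size s)%N.
Proof. move=> hs; have [_ H] := @qdim_spec V W (ex_intro _ s hs); exact: H hs. Qed.

End La.

Section Filt.
Variables (K : fieldType) (A : algType K).

Lemma filt_mono (V : nat -> A -> Prop) a b x : filtration V -> (a <= b)%N -> V a x -> V b x.
Proof.
move=> [_ [_ [HS _]]] ab; elim: b ab => [|b IH]; first by rewrite leqn0 => /eqP ->.
by rewrite leq_eqVlt => /orP [/eqP -> //| /IH h /h]; apply: HS.
Qed.

Definition dd (V : nat -> A -> Prop) n := qdim (V n) (V n.-1).

Lemma Vspan (V : nat -> A -> Prop) : filtration V -> forall n, exists S : seq A,
  (size S <= \sum_(i < n.+1) dd V i)%N /\ (forall x, x \in S -> V n x) /\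
  forall v, V n v -> sp S v.
Proof.
move=> HV; have [Hsub [H0 [HS [_ [_ Hq]]]]] := HV.
elim => [|n [S [sS [SV VS]]]].
  exists [::]; split => //; split => // v /H0 -> //.
have [[t [st ht]] _] := @qdim_spec _ _ (V n.+1) (V n) (Hq n).
move/spans_modE: ht => [tV Vt].
exists (t ++ S); split.
  by rewrite size_cat big_ord_recr /= addnC leq_add // st.
split.
  by move=> x; rewrite mem_cat => /orP [/tV // | /SV /HS].
move=> v /Vt [y [hy /(VS _) hv]].
by have := sp_cat hy hv; rewrite addrC subrK.
Qed.
End Filt.

Section Main.
Variables (R : realType) (K : fieldType) (A : algType K).

Definition term (V : nat -> A -> Prop) n : R := ln ((qdim (V n) (V n.-1))%:R : R) / n%:R.

Lemma main_le (V W : nat -> A -> Prop) m : filtration V ->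
  (LS (term V) <= 0)%E -> (forall n, is_subspace (W n)) -> (0 < m)%N ->
  (forall n x, W n x -> V (n * m)%N x) -> (LS (term W) <= 0)%E.
Proof.
move=> HV HL HW m0 WV.
have sd : subexp R (dd V) by apply: from_LS.
have sP := subexp_sum sd.
apply: (to_LS (f := dd W)).
apply: (subexp_comp m0 sP) => n.
have [S [sS [SV VS]]] := Vspan HV (n * m).
have [t [st [tW Wt]]] := @steinitz _ _ S (W n) (HW n) (fun u h => VS _ (WV _ _ h)).
apply: leq_trans sS; apply: leq_trans st.
apply: qdim_le; apply/spans_modE; split => // v hv; exists v; split; first exact: Wt.
by rewrite subrr; case: (HW n.-1).
Qed.

Lemma h_alg_zero (V W : nat -> A -> Prop) m : filtration V ->
  h_alg R V = 0%E -> (forall n, is_subspace (W n)) -> (0 < m)%N ->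
  (forall n x, W n x -> V (n * m)%N x) -> h_alg R W = 0%E.
Proof.
rewrite /h_alg; case: asboolP => // _ HV HL HW m0 WV.
apply/le_anti/andP; split.
  by apply: (main_le HV _ HW m0 WV); rewrite /LS /term HL.
by apply: LS_ge0 => n; apply: term_ge0 (fun n => qdim (W n) (W n.-1)) n.
Qed.
End Main.

Section Part3.
Variables (K : fieldType) (A : algType K).

Lemma prod_in (V : nat -> A -> Prop) m (l : seq A) w : filtration V ->
  (forall x, x \in l -> V m x) -> V m w -> V ((size l).+1 * m)%N (\prod_(x <- w :: l) x).
Proof.
move=> HV; have [_ [_ [_ [_ [HM _]]]]] := HV.
elim: l w => [|w' l IH] w Hl Hw.
  by rewrite big_cons big_nil mulr1 mul1n.
rewrite big_cons /= mulSn; apply: HM => //.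
apply: IH => [x hx|]; first by apply: Hl; rewrite in_cons hx orbT.
by apply: Hl; rewrite mem_head.
Qed.

Lemma bound_list (V : nat -> A -> Prop) (g : seq A) : filtration V ->
  exists m, (0 < m)%N /\ forall x, x \in g -> V m x.
Proof.
move=> HV; have [_ [_ [_ [HU _]]]] := HV.
elim: g => [|a g [m [m0 Hm]]]; first by exists 1%N.
have [na hna] := HU a.
exists (maxn m na); split; first by rewrite leq_max m0.
move=> x; rewrite in_cons => /orP [/eqP ->|/Hm h].
  by apply: filt_mono hna => //; rewrite leq_maxr.
by apply: filt_mono h => //; rewrite leq_maxl.
Qed.

Lemma part3 (V W : nat -> A -> Prop) : filtration V -> filtration W -> finite_dim (W 1%N) ->
  (forall k x, (0 < k)%N -> (W k x <-> pow_span (W 1%N) k x)) ->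
  exists m, (0 < m)%N /\ forall n x, W n x -> V (n * m)%N x.
Proof.
move=> HV HW [g /spans_modE [gW Wg]] Hk.
have [m [m0 Hm]] := bound_list g HV.
have [HsV _] := HV.
have W1V : forall x, W 1%N x -> V m x.
  move=> x /Wg [y [hy e]]; move/eqP: e; rewrite subr_eq0 => /eqP ->.
  exact: sp_sub (HsV m) Hm hy.
exists m; split => // -[|k] x.
  by have [_ [H0 _]] := HW; move/H0 ->; case: (HsV 0%N).
move/(Hk _ _ (ltn0Sn k)) => [r [Hr ->]].
have [V0 VD VZ] := HsV (k.+1 * m)%N.
elim: r Hr => [|p r IH] Hr; first by rewrite big_nil.
rewrite big_cons; apply: VD; last by apply: IH => q hq; apply: Hr; rewrite in_cons hq orbT.
apply: VZ; have [sz hw] := Hr p (mem_head _ _).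
case: p {Hr} sz hw => c [|w l] //= [sz] hw.
rewrite -sz; apply: prod_in => //.
  by move=> z hz; apply: W1V; apply: hw; rewrite in_cons hz orbT.
by apply: W1V; apply: hw; rewrite mem_head.
Qed.
End Part3.

Theorem proposition3p4 (R : realType) (K : fieldType) (A : algType K)
    (V : nat -> A -> Prop) :
  fin_gen_algebra A -> filtration V -> h_alg R V = 0%E ->
  [/\ (forall W : nat -> A -> Prop, filtration W ->
         (forall n x, W n x -> V n x) -> h_alg R W = 0%E),
      (forall k : nat, (0 < k)%N -> h_alg R (fun n => V (n * k)%N) = 0%E) &
      (forall W : nat -> A -> Prop, filtration W -> finite_dim (W 1%N) ->
         (forall k x, (0 < k)%N -> (W k x <-> pow_span (W 1%N) k x)) ->
         h_alg R W = 0%E) ].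
Proof.
move=> _ HV HL; split.
- move=> W [HsW _] WV; apply: (h_alg_zero (m := 1%N) HV HL HsW) => // n x.
  by rewrite muln1; apply: WV.
- move=> k k0; apply: (h_alg_zero (m := k) HV HL) => // n.
  by have [Hs _] := HV; apply: Hs.
- move=> W HW Hf Hk; have [m [m0 Hm]] := part3 HV HW Hf Hk.
  by have [HsW _] := HW; apply: (h_alg_zero (m := m) HV HL HsW).
Qed.
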